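(* Let $G_1$ and $G_2$ be connected graphs, where $G_1$ has at least two vertices. Then $$\chi_d^t(G_1\star G_2)\leq |V(G_1)|+|V(G_2)|.$$
   Context: All graphs are simple and finite. A total dominator coloring (TD-coloring) of a graph $G$ with no isolated vertex is a proper vertex coloring of $G$ in which every vertex of $G$ is adjacent to every vertex of some color class (a color class being the set of all vertices receiving a given color). The total dominator chromatic number (TDC-number) $\chi_d^t(G)$ is the minimum number of colors in a TD-coloring of $G$. The neighbourhood corona $G_1\star G_2$ of graphs $G_1$ and $G_2$ is the graph obtained by taking one copy of $G_1$ and $|V(G_1)|$ copies of $G_2$, and, for each $i$, joining every neighbour (in $G_1$) of the $i$-th vertex of $G_1$ to every vertex of the $i$-th copy of $G_2$. *)

(* Defs.v *)
From mathcomp Require Import all_boot.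
Set Implicit Arguments. Unset Strict Implicit. Unset Printing Implicit Defensive.

Definition simple_graph (T : finType) (e : rel T) : Prop :=
  symmetric e /\ irreflexive e.

Definition connected_graph (T : finType) (e : rel T) : Prop :=
  0 < #|T| /\ forall x y : T, connect e x y.

Definition no_isolated (T : finType) (e : rel T) : bool :=
  [forall v, exists w, e v w].

Definition proper_coloring (T : finType) (e : rel T) (k : nat)
  (c : T -> 'I_k) : bool :=
  [forall x, forall y, e x y ==> (c x != c y)].

Definition td_coloring (T : finType) (e : rel T) (k : nat)
  (c : T -> 'I_k) : bool :=
  proper_coloring e c &&
  [forall v, exists j : 'I_k,
     [exists w, c w == j] && [forall w, (c w == j) ==> e v w]].

Definition td_colorable (T : finType) (e : rel T) (k : nat) : bool :=
  [exists c : {ffun T -> 'I_k}, td_coloring e c].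

(* When G has no
   isolated vertex, #|T| colours always suffice, so this is the minimum. *)
Definition tdc_number (T : finType) (e : rel T) : nat :=
  find (td_colorable e) (iota 0 #|T|.+1).

(* Neighbourhood corona G1 * G2: vertices are the vertices of G1 (inl) and
   pairs (i, a) = vertex a of the i-th copy of G2 (inr). *)
Definition ncorona_rel (T1 T2 : finType) (e1 : rel T1) (e2 : rel T2)
  : rel (T1 + (T1 * T2)) :=
  fun x y =>
    match x, y with
    | inl u, inl v => e1 u v
    | inr (i, a), inr (j, b) => (i == j) && e2 a b
    | inl u, inr (i, _) => e1 u i
    | inr (i, _), inl u => e1 i u
    end.

(* Main.v *)
Require Import Defs.
From mathcomp Require Import all_boot.

Lemma has_nbr (T : finType) (e : rel T) :
  connected_graph e -> 1 < #|T| -> forall u, exists v, e u v.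
Proof.
move=> [_ Hc] H2 u.
have [w Hw] : exists w, w != u.
  move/card_gt1P: H2 => [x [y [_ _ Hxy]]].
  case: (eqVneq x u) => [Exu|Hxu]; last by exists x.
  by exists y; rewrite -Exu eq_sym.
have := Hc u w => /connectP [[|v p] /= Hp Hl].
  by rewrite Hl eqxx in Hw.
by exists v; case/andP: Hp.
Qed.

Theorem theorem1 (T1 T2 : finType) (e1 : rel T1) (e2 : rel T2) :
  simple_graph e1 -> simple_graph e2 ->
  connected_graph e1 -> connected_graph e2 ->
  1 < #|T1| ->
  tdc_number (ncorona_rel e1 e2) <= #|T1| + #|T2|.
Proof.
move=> [s1 i1] [s2 i2] C1 C2 H2.
have Hn := @has_nbr _ _ C1 H2.
set k := #|T1| + #|T2|.
pose c (x : T1 + (T1 * T2)) : 'I_k :=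
  match x with
  | inl u => lshift #|T2| (enum_rank u)
  | inr (i, a) => rshift #|T1| (enum_rank a)
  end.
have Hcol : td_colorable (ncorona_rel e1 e2) k.
  apply/existsP; exists (finfun c); apply/andP; split.
    apply/forallP => x; apply/forallP => y; apply/implyP; rewrite !ffunE.
    case: x => [u|[i a]]; case: y => [v|[j b]] /= He.
    - apply/negP => /eqP/(congr1 val) /= /val_inj/enum_rank_inj Euv.
      by subst; rewrite i1 in He.
    - apply/negP => /eqP/(congr1 val) /= E.
      by have := ltn_ord (enum_rank u); rewrite E ltnNge leq_addr.
    - apply/negP => /eqP/(congr1 val) /= E.
      by have := ltn_ord (enum_rank v); rewrite -E ltnNge leq_addr.
    - apply/negP => /eqP/(congr1 val) /= /eqP; rewrite eqn_add2l => /eqP.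
      move=> /val_inj/enum_rank_inj Eab; subst.
      by case/andP: He => _; rewrite i2.
  apply/forallP => x.
  have [v Hv] : exists v, ncorona_rel e1 e2 x (inl v).
    case: x => [u|[i a]] /=; [exact: Hn | exact: Hn].
  apply/existsP; exists (c (inl v)); apply/andP; split.
    by apply/existsP; exists (inl v); rewrite ffunE.
  apply/forallP => y; apply/implyP; rewrite ffunE.
  case: y => [w|[j b]] /= /eqP E.
  - move: E => /(congr1 val) /= /val_inj/enum_rank_inj ->; exact: Hv.
  - move: E => /(congr1 val) /= E.
    by have := ltn_ord (enum_rank v); rewrite -E ltnNge leq_addr.
rewrite /tdc_number leqNgt; apply/negP => Hlt.
have := before_find 0 Hlt.
rewrite nth_iota ?add0n ?Hcol //.
rewrite card_sum card_prod ltnS /k leq_add2l.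
have : 0 < #|T2| by case: C2.
case: #|T1| H2 => [|[|n]] // _ ; case: #|T2| => // m _.
by rewrite mulSn leq_addr.
Qed.
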